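(* Let $\pi=(\pi_1,\dots,\pi_n)$ and $\lambda=(\lambda_1,\dots,\lambda_n)$ be partitions with at most $n$ parts such that $\lambda\not\subseteq\pi$ (i.e. $\lambda_i>\pi_i$ for some $i$). Then $W_\lambda(q^\pi t^{\delta(n)};q,p,t,a,b)=0$.
   Context: Fix $|p|<1$; parameters generic. $E(x)=(x;p)_\infty(p/x;p)_\infty$. For integer $m\ge0$, $(a)_m=\prod_{k=0}^{m-1}E(aq^k)$, for $m<0$, $(a)_m=1/(aq^m)_{-m}$; for a partition $\lambda$ with $n$ parts $(a)_\lambda=\prod_{i=1}^n(at^{1-i})_{\lambda_i}$; several arguments denote products; integer subscripts denote the single-integer symbol. $q^\pi t^{\delta(n)}=(q^{\pi_1}t^{n-1},q^{\pi_2}t^{n-2},\dots,q^{\pi_n})$. For $n$-part partitions with $\lambda_1\ge\mu_1\ge\dots\ge\lambda_n\ge\mu_n$, $\lambda_{n+1}=\mu_{n+1}=0$, $H_{\lambda/\mu}(q,p,t,b)=\prod_{1\le i<j\le n}\Big\{\frac{(q^{\mu_i-\mu_{j-1}}t^{j-i})_{\mu_{j-1}-\lambda_j}(q^{\lambda_i+\lambda_j}t^{3-j-i}b)_{\mu_{j-1}-\lambda_j}}{(q^{\mu_i-\mu_{j-1}+1}t^{j-i-1})_{\mu_{j-1}-\lambda_j}(q^{\lambda_i+\lambda_j+1}t^{2-j-i}b)_{\mu_{j-1}-\lambda_j}}\frac{(q^{\lambda_i-\mu_{j-1}+1}t^{j-i-1})_{\mu_{j-1}-\lambda_j}}{(q^{\lambda_i-\mu_{j-1}}t^{j-i})_{\mu_{j-1}-\lambda_j}}\Big\}\prod_{1\le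 i<j-1\le n}\frac{(q^{\mu_i+\lambda_j+1}t^{1-j-i}b)_{\mu_{j-1}-\lambda_j}}{(q^{\mu_i+\lambda_j}t^{2-j-i}b)_{\mu_{j-1}-\lambda_j}}$; for $x\in\mathbb{C}$, $W_{\lambda/\mu}(x;q,p,t,a,b)=H_{\lambda/\mu}\frac{(x^{-1},ax)_\lambda(qbx/t,qb/(axt))_\mu}{(x^{-1},ax)_\mu(qbx,qb/(ax))_\lambda}\prod_{i=1}^n\frac{E(bt^{1-2i}q^{2\mu_i})}{E(bt^{1-2i})}\frac{(bt^{1-2i})_{\mu_i+\lambda_{i+1}}}{(bqt^{-2i})_{\mu_i+\lambda_{i+1}}}t^{i(\mu_i-\lambda_{i+1})}$ (zero if the interlacing fails); recursively $W_{\lambda/\mu}(y,z_1,\dots,z_\ell;q,p,t,a,b)=\sum_\nu W_{\lambda/\nu}(yt^{-\ell};q,p,t,at^{2\ell},bt^\ell)W_{\nu/\mu}(z_1,\dots,z_\ell;q,p,t,a,b)$ over $\nu$ with $\lambda_1\ge\nu_1\ge\dots\ge\lambda_n\ge\nu_n\ge0$; $W_\lambda=W_{\lambda/0}$ where $0=(0,\dots,0)$. *)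

(* Defs.v *)
From HB Require Import structures.
From mathcomp Require Import all_boot all_order all_algebra.
From mathcomp Require Import complex.
From mathcomp Require Import Rstruct.
From Stdlib Require Rdefinitions.
From Stdlib Require Import ClassicalEpsilon.
Set Implicit Arguments. Unset Strict Implicit. Unset Printing Implicit Defensive.
Import Order.TTheory GRing.Theory Num.Theory.
Local Open Scope ring_scope.

Definition CC : Type := (Rdefinitions.R)[i].

(** Convergence of a complex sequence, and its limit (chosen by classical
    choice; only ever used on convergent sequences). *)
Definition cconv (u : nat -> CC) (l : CC) : Prop :=
  forall e : Rdefinitions.R, 0 < e ->
    exists N : nat, forall m : nat, (N <= m)%N -> `|u m - l| < (e%:C)%C.

Definition clim (u : nat -> CC) : CC :=
  epsilon (inhabits (0 : CC)) (fun l => cconv u l).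

(** Theta function  E(x) = (x;p)_oo (p/x;p)_oo  as the limit of its
    partial products. *)
Definition theta (p x : CC) : CC :=
  clim (fun N => \prod_(k < N) ((1 - x * p ^+ k) * (1 - p ^+ k.+1 / x))).

(** Elliptic shifted factorial for an integer m:
    (a)_m = prod_{k=0}^{m-1} E(a q^k)  (m >= 0),  (a)_m = 1/(a q^m)_{-m} (m < 0). *)
Definition epoch (p q a : CC) (m : int) : CC :=
  match m with
  | Posz k => \prod_(i < k) theta p (a * q ^+ i)
  | Negz k => (\prod_(i < k.+1) theta p (a * q ^ (- (k.+1)%:Z) * q ^+ i))^-1
  end.

(** Partitions with n parts are encoded as sequences of naturals of size n;
    [part l i] is the i-th part (1-indexed), and it is 0 for i > size l. *)
Definition part (l : seq nat) (i : nat) : nat := nth 0%N l i.-1.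

Definition is_partition (n : nat) (l : seq nat) : Prop :=
  size l = n /\ sorted geq l.

Definition interlace (n : nat) (lam mu : seq nat) : bool :=
  [&& size lam == n, size mu == n &
      all (fun i => (part mu i <= part lam i)%N && (part lam i.+1 <= part mu i)%N)
          (iota 1 n)].

Definition epoch_part (p q t a : CC) (n : nat) (lam : seq nat) : CC :=
  \prod_(1 <= i < n.+1) epoch p q (a * t ^ (1 - (i%:Z))) (part lam i)%:Z.

(** The ratio (a)_lam / (a)_mu for mu contained in lam, written out as the
    product of the factors that survive cancellation:
    prod_i prod_{k = mu_i}^{lam_i - 1} E(a t^{1-i} q^k). *)
Definition epoch_ratio (p q t a : CC) (n : nat) (lam mu : seq nat) : CC :=
  \prod_(1 <= i < n.+1)
    \prod_(part mu i <= k < part lam i) theta p (a * t ^ (1 - (i%:Z)) * q ^+ k).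

Definition Hfac (p q t b : CC) (n : nat) (lam mu : seq nat) : CC :=
  let L i := (part lam i)%:Z in
  let M i := (part mu i)%:Z in
  let e a m := epoch p q a m in
  (\prod_(1 <= j < n.+1) \prod_(1 <= i < j)
     let m := M (j.-1) - L j in
     (e (q ^ (M i - M j.-1) * t ^ (j%:Z - i%:Z)) m
        * e (q ^ (L i + L j) * t ^ (3 - j%:Z - i%:Z) * b) m)
     / (e (q ^ (M i - M j.-1 + 1) * t ^ (j%:Z - i%:Z - 1)) m
        * e (q ^ (L i + L j + 1) * t ^ (2 - j%:Z - i%:Z) * b) m)
     * (e (q ^ (L i - M j.-1 + 1) * t ^ (j%:Z - i%:Z - 1)) m
        / e (q ^ (L i - M j.-1) * t ^ (j%:Z - i%:Z)) m))
  * (\prod_(1 <= j < n.+2) \prod_(1 <= i < j.-1)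
     let m := M (j.-1) - L j in
     e (q ^ (M i + L j + 1) * t ^ (1 - j%:Z - i%:Z) * b) m
     / e (q ^ (M i + L j) * t ^ (2 - j%:Z - i%:Z) * b) m).

Definition W1 (p q t a b : CC) (n : nat) (lam mu : seq nat) (x : CC) : CC :=
  if interlace n lam mu then
    let L i := (part lam i)%:Z in
    let M i := (part mu i)%:Z in
    Hfac p q t b n lam mu
    * epoch_ratio p q t x^-1 n lam mu
    * epoch_ratio p q t (a * x) n lam mu
    * (epoch_part p q t (q * b * x / t) n mu
       * epoch_part p q t (q * b / (a * x * t)) n mu)
    / (epoch_part p q t (q * b * x) n lam
       * epoch_part p q t (q * b / (a * x)) n lam)
    * \prod_(1 <= i < n.+1)
        (theta p (b * t ^ (1 - 2 * i%:Z) * q ^ (2 * M i))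
         / theta p (b * t ^ (1 - 2 * i%:Z))
         * (epoch p q (b * t ^ (1 - 2 * i%:Z)) (M i + L i.+1)
            / epoch p q (b * q * t ^ (- 2 * i%:Z)) (M i + L i.+1))
         * t ^ (i%:Z * (M i - L i.+1)))
  else 0.

Fixpoint cands (n B : nat) : seq (seq nat) :=
  match n with
  | 0 => [:: [::]]
  | n'.+1 => [seq x :: s | x <- iota 0 B.+1, s <- cands n' B]
  end.

(** Multivariable W_{lam/mu}(x_1, ..., x_l; q,p,t,a,b) via the branching rule
    W_{lam/mu}(y,z_1..z_l; a,b)
      = sum_nu W_{lam/nu}(y t^{-l}; a t^{2l}, b t^l) W_{nu/mu}(z_1..z_l; a,b). *)
Fixpoint Wskew (p q t a b : CC) (n : nat) (xs : seq CC) (lam mu : seq nat)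
  {struct xs} : CC :=
  match xs with
  | [::] => (lam == mu)%:R
  | [:: y] => W1 p q t a b n lam mu y
  | y :: zs =>
      let l := size zs in
      \sum_(nu <- cands n (part lam 1) | interlace n lam nu)
        W1 p q t (a * t ^+ (2 * l)) (b * t ^+ l) n lam nu (y * t ^- l)
        * Wskew p q t a b n zs nu mu
  end.

Definition Wfun (p q t a b : CC) (n : nat) (xs : seq CC) (lam : seq nat) : CC :=
  Wskew p q t a b n xs lam (nseq n 0%N).

(** The point q^pi t^{delta(n)} = (q^{pi_1} t^{n-1}, ..., q^{pi_n}). *)
Definition spec_point (q t : CC) (n : nat) (pi : seq nat) : seq CC :=
  [seq q ^+ part pi i * t ^+ (n - i) | i <- iota 1 n].

(** Genericity of the parameters: no nontrivial monomial q^i t^j a^k b^l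
    is an integer power of p (i.e. a zero of the theta function). *)
Definition generic_params (p q t a b : CC) : Prop :=
  forall i j k l m : int, (i, j, k, l) != (0, 0, 0, 0) ->
    q ^ i * t ^ j * a ^ k * b ^ l != p ^ m.

(* Main.v *)
Require Import Defs.
From HB Require Import structures.
From mathcomp Require Import all_boot all_order all_algebra.
From mathcomp Require Import complex.
From mathcomp Require Import Rstruct.
From Stdlib Require Import ClassicalEpsilon.
From mathcomp Require Import zify.
Import Order.TTheory GRing.Theory Num.Theory.
Local Open Scope ring_scope.

Lemma theta1 (p : CC) : theta p 1 = 0.
Proof.
rewrite /theta /clim.
set u := fun N : nat => _.
have u0 : forall m, (1 <= m)%N -> u m = 0.
  move=> [|m] // _; rewrite /u big_ord_recl /= expr0 mul1r subrr !mul0r //.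
have H : cconv u (epsilon (inhabits (0:CC)) (fun l => cconv u l)).
  apply: epsilon_spec.
  exists 0 => e e0; exists 1%N => m hm; rewrite u0 // subrr normr0.
  by rewrite ltcR.
move: H; set L := epsilon _ _ => H.
apply/eqP; apply/negPn/negP => HL.
have := normc_def L; set r := Num.sqrt _ => Hr.
have r0 : 0 < r.
  by rewrite -ltcR -Hr normr_gt0.
have [N HN] := H r r0.
have := HN (maxn N 1) (leq_maxl _ _).
by rewrite u0 ?leq_maxr // sub0r normrN Hr ltxx.
Qed.

Lemma W1_zero (p q t a b : CC) n lam mu (s : nat) :
  q != 0 -> (0 < n)%N -> (part mu 1 <= s)%N -> (s < part lam 1)%N ->
  W1 p q t a b n lam mu (q ^+ s) = 0.
Proof.
move=> q0 n0 h1 h2.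
rewrite /W1; case: ifP => // _.
suff -> : epoch_ratio p q t (q ^+ s)^-1 n lam mu = 0.
  by rewrite mulr0 !mul0r.
rewrite /epoch_ratio big_ltn ?ltnS //.
rewrite (@big_cat_nat _ _ _ s) //=; last exact: ltnW.
rewrite (big_ltn h2) subrr expr0z mulr1 mulVf ?expf_neq0 // theta1.
by rewrite mul0r mulr0 mul0r.
Qed.

Lemma Wskew_cons (p q t a b : CC) n y zs lam mu : zs != [::] ->
  Wskew p q t a b n (y :: zs) lam mu =
  \sum_(nu <- cands n (part lam 1) | interlace n lam nu)
        W1 p q t (a * t ^+ (2 * size zs)) (b * t ^+ size zs) n lam nu (y * t ^- size zs)
        * Wskew p q t a b n zs nu mu.
Proof. by case: zs. Qed.

Lemma interlaceP n lam mu i : interlace n lam mu -> (1 <= i <= n)%N ->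
  (part mu i <= part lam i)%N /\ (part lam i.+1 <= part mu i)%N.
Proof.
case/and3P => _ _ /allP H hi.
have /H /andP[] // : i \in iota 1 n by rewrite mem_iota; lia.
Qed.

Lemma pi_mono pi n j : sorted geq pi -> size pi = n -> (1 <= j)%N -> (j < n)%N ->
  (part pi j.+1 <= part pi j)%N.
Proof.
move=> Hs Hz h1 h2; rewrite /part /=.
have tr : transitive geq by move=> x y z /= h h'; apply: leq_trans h.
have := @sorted_leq_nth _ geq tr (fun x => leqnn x) 0%N pi Hs (j.-1) j.
have -> : j = j.-1.+1 by lia.
rewrite /=; apply; rewrite ?inE; lia.
Qed.

Lemma key (p q t a b : CC) n pi (q0 : q != 0) (t0 : t != 0)
  (Hs : sorted geq pi) (Hz : size pi = n) :
  forall k, (0 < k)%N -> (k <= n)%N -> forall nu,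
  (exists m, (0 < m)%N /\ (n - k + m <= n)%N /\ (part pi (n - k + m) < part nu m)%N) ->
  Wskew p q t a b n [seq q ^+ part pi i * t ^+ (n - i) | i <- iota (n - k).+1 k]
    nu (nseq n 0%N) = 0.
Proof.
elim=> [|k IH] // _ hk nu [m [m0 [hm hlt]]].
case: k IH hk hm hlt => [|k] IH hk hm hlt.
  have m1 : m = 1%N by lia.
  subst m; rewrite addn1 in hlt.
  rewrite /=.
  have -> : (n - (n - 1).+1 = 0)%N by lia.
  rewrite /= expr0 mulr1; apply: W1_zero => //.
  by rewrite /part /= nth_nseq if_same.
set f := fun i => _.
have ej : (n - k.+1).+1 = (n - k.+2).+2 by lia.
have -> : map f (iota (n - k.+2).+1 k.+2) =
   f (n - k.+2).+1 :: map f (iota (n - k.+1).+1 k.+1) by rewrite ej.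
rewrite Wskew_cons // size_map size_iota.
apply: big1 => nu' Hint.
have ex : f (n - k.+2).+1 * t ^- k.+1 = q ^+ part pi (n - k.+2).+1.
  rewrite /f; have -> : (n - (n - k.+2).+1 = k.+1)%N by lia.
  by rewrite mulfK // expf_neq0.
rewrite ex.
have [m1|m1] := eqVneq m 1%N.
  subst m; rewrite addn1 in hlt.
  case: (leqP (part nu' 1) (part pi (n - k.+2).+1)) => h.
    by rewrite W1_zero ?mul0r //; lia.
  rewrite IH ?mulr0 //; first lia.
  exists 1%N; split=> //; split; first lia.
  rewrite addn1 ej; apply: leq_ltn_trans h.
  apply: pi_mono => //; lia.
rewrite IH ?mulr0 //; first lia.
exists m.-1; split; first lia.
split; first lia.
have hi : (1 <= m.-1 <= n)%N by lia.
have [h1 h2] := @interlaceP _ _ _ m.-1 Hint hi.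
apply: leq_trans h2.
have -> : (n - k.+1 + m.-1 = n - k.+2 + m)%N by lia.
by have -> : m.-1.+1 = m by lia.
Qed.

Theorem mainTheorem5 (n : nat) (pi lam : seq nat) (p q t a b : CC) :
  `|p| < 1 -> q != 0 -> t != 0 -> a != 0 -> b != 0 ->
  generic_params p q t a b ->
  is_partition n pi -> is_partition n lam ->
  (exists i : nat, (1 <= i <= n)%N /\ (part pi i < part lam i)%N) ->
  Wfun p q t a b n (spec_point q t n pi) lam = 0.
Proof.
move=> _ q0 t0 _ _ _ [Hz Hs] _ [i [hi hlt]].
rewrite /Wfun /spec_point.
have -> : iota 1 n = iota (n - n).+1 n by rewrite subnn.
apply: (key p q t a b n pi q0 t0 Hs Hz n).
- lia.
- by [].
exists i; rewrite subnn add0n; split; first lia.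
split; [lia | done].
Qed.
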